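(* Let $F$ be a unit tree and let $!E,G,H$ be units of $F$. If $!E$ dominates $G$ in $F$ and $H$ is a subunit of $G$, then $!E$ dominates $H$ in $F$.
   Context: Formulas are built from atoms by $\neg$ (on atoms only), binary $\wedge,\vee$ and unary $!$ (branching recurrence) and $?$ (branching corecurrence). Fix a formula $\mathbb{F}_0$. Oformulas are occurrences of subformulas of $\mathbb{F}_0$. Politerals are occurrences of literals $P$ or $\neg P$ that are not in the scope of $\neg$; thus an atom $P$ inside $\neg P$ is not a politeral. The modal depth of an oformula is the number of its proper superoccurrences of the form $!E$ or $?E$. A unit is $E[\vec x]$, with $E$ an oformula and $\vec x$ a tuple of infinite bitstrings whose length is the modal depth of $E$. Parenthood: - $G_0[\vec x]$ and $G_1[\vec x]$ are the children of $(G_0\wedge G_1)[\vec x]$ and of $(G_0\vee G_1)[\vec x]$; - the $G[\vec x,y]$, for all infinite bitstrings $y$, are the children of $!G[\vec x]$ and of $?G[\vec x]$. The root is $\mathbb{F}_0[\,]$. ''Subunit'' and ''superunit'' are the reflexive-transitive closures of the child relation and its converse, and ''proper'' means distinct. The $\mathbb{F}_0$-origin $\tilde E$ of $E[\vec x]$ is $E$. $!$-, $?$-, $\wedge$-, $\vee$- and politeral units are those whose origin is of the corresponding form. The smallest common superunit of two units is their common superunit that is a subunit of all their common superunits. $E$ drives $G$ through $H$ iff $H$ is the smallest common superunit of $E,G$ and no proper $?$-superunit of $E$ is a subunit of $H$. A unit tree is a nonempty set $S$ of units such that, for each $E\in S$: all superunits of $E$ are in $S$; if $E$ is a $\wedge$-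 or $\vee$-unit, both children of $E$ are in $S$; and if $E$ is a $!$- or $?$-unit, at least one child of $E$ is in $S$. Runs are sequences of labeled moves $\wp\beta$ with $\wp\in\{\top,\bot\}$. For a run $\Theta$ and a string $\alpha$, $\Theta^{\alpha}$ is obtained by keeping only the labmoves whose move begins with $\alpha$ and deleting that prefix. For an infinite bitstring $y$, $\Theta^{\preceq y}$ is obtained by keeping only the labmoves of the form $\wp\, u.\beta$ with $u$ a finite prefix of $y$ and deleting the prefix ''$u.$''. Fix an arbitrary run $\Omega$. The projection of $\Omega$ on units is defined as follows: on $\mathbb{F}_0[\,]$ it is $\Omega$; if $\Theta$ is the projection on $E[\vec x]$, then the projection on the child $G_i[\vec x]$ of a $\wedge$- or $\vee$-unit is $\Theta^{i.}$, and on the child $G[\vec x,y]$ of a $!$- or $?$-unit it is $\Theta^{\preceq y}$. Politeral units $L,M$ are opposite iff $\tilde L=\neg\tilde M$ (or $\tilde M=\neg\tilde L$) as literals and, for each $\wp\in\{\top,\bot\}$, the set of $\wp$-labeled moves in the projection of $\Omega$ on $L$ equals the set of $\neg\wp$-labeled moves in the projection of $\Omega$ on $M$. For a unit tree $F$ and $!E,G\in F$, a $!E$-over-$G$ domination chain in $F$ is a sequence $L_1,M_1,X_1,\dots,L_n,M_n,X_n$ ($n\ge1$) of units such that, writing $L_{n+1}=G$, for each $i\in\{1,\dots,n\}$: 1. $L_i$ and $M_i$ are opposite politeral units of $F$; 2. $M_i$ drives $L_{i+1}$ through $X_i$; 3. $M_i$ drives no $L_j$ with $i+2\le j\le n+1$;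 4. $M_i$ is not a subunit of $!E$; 5. $L_1$ is a subunit of $!E$. $!E$ dominates $G$ in $F$ iff $!E,G\in F$ and either $G$ is a proper subunit of $!E$ or there exists a $!E$-over-$G$ domination chain in $F$. *)

(* Defs.v *)
From Stdlib Require Import List Relations.
Import ListNotations.
Set Implicit Arguments.

(* Formulas: atoms are naturals; negation only on atoms (NegAtom is a leaf,
   so an atom under a negation is not an occurrence of its own). *)
Inductive formula : Type :=
| Atom (a : nat)
| NegAtom (a : nat)
| FAnd (f g : formula)
| FOr (f g : formula)
| FBang (f : formula)
| FQuest (f : formula).

(* Occurrences (oformulas) of subformulas of F0 are given by paths from the
   root: 0/1 for the left/right argument of a binary connective, 0 for the
   argument of ! or ?. *)
Fixpoint sub (f : formula) (p : list nat) : option formula :=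
  match p with
  | [] => Some f
  | i :: p' =>
    match f, i with
    | FAnd a _, 0 | FOr a _, 0 => sub a p'
    | FAnd _ b, 1 | FOr _ b, 1 => sub b p'
    | FBang a, 0 | FQuest a, 0 => sub a p'
    | _, _ => None
    end
  end.

Fixpoint mdepth (f : formula) (p : list nat) : nat :=
  match p with
  | [] => 0
  | i :: p' =>
    match f, i with
    | FAnd a _, 0 | FOr a _, 0 => mdepth a p'
    | FAnd _ b, 1 | FOr _ b, 1 => mdepth b p'
    | FBang a, 0 | FQuest a, 0 => S (mdepth a p')
    | _, _ => 0
    end
  end.

Definition bitstring := nat -> bool.

(* A unit E[x1,...,xk] : the path of the oformula E and the tuple (x1..xk),
   listed outermost first. *)
Definition unit_ := (list nat * list bitstring)%type.

Definition is_unit (F0 : formula) (u : unit_) : Prop :=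
  sub F0 (fst u) <> None /\ length (snd u) = mdepth F0 (fst u).

Definition origin (F0 : formula) (u : unit_) : option formula := sub F0 (fst u).

Definition is_and_unit F0 u := exists a b, origin F0 u = Some (FAnd a b).
Definition is_or_unit F0 u := exists a b, origin F0 u = Some (FOr a b).
Definition is_bang_unit F0 u := exists a, origin F0 u = Some (FBang a).
Definition is_quest_unit F0 u := exists a, origin F0 u = Some (FQuest a).
Definition is_politeral_unit F0 u :=
  exists a, origin F0 u = Some (Atom a) \/ origin F0 u = Some (NegAtom a).

Definition child (F0 : formula) (u v : unit_) : Prop :=
  is_unit F0 u /\
  ( ((is_and_unit F0 u \/ is_or_unit F0 u) /\
      exists i, (i = 0 \/ i = 1) /\ v = (fst u ++ [i], snd u))
  \/ ((is_bang_unit F0 u \/ is_quest_unit F0 u) /\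
      exists y : bitstring, v = (fst u ++ [0], snd u ++ [y])) ).

Definition root : unit_ := ([], []).

(* subunit v u : v is a subunit of u  (u is a superunit of v) *)
Definition subunit (F0 : formula) (v u : unit_) : Prop :=
  clos_refl_trans unit_ (child F0) u v.

Definition smallest_common_superunit (F0 : formula) (E G H : unit_) : Prop :=
  is_unit F0 H /\ subunit F0 E H /\ subunit F0 G H /\
  forall K, is_unit F0 K -> subunit F0 E K -> subunit F0 G K -> subunit F0 H K.

Definition drives (F0 : formula) (E G H : unit_) : Prop :=
  smallest_common_superunit F0 E G H /\
  forall Q, is_unit F0 Q -> is_quest_unit F0 Q -> subunit F0 E Q -> Q <> E ->
    ~ subunit F0 Q H.

Definition unit_tree (F0 : formula) (S : unit_ -> Prop) : Prop :=
  (exists u, S u) /\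
  forall E, S E ->
    is_unit F0 E /\
    (forall K, is_unit F0 K -> subunit F0 E K -> S K) /\
    ((is_and_unit F0 E \/ is_or_unit F0 E) ->
        forall C, child F0 E C -> S C) /\
    ((is_bang_unit F0 E \/ is_quest_unit F0 E) ->
        exists C, child F0 E C /\ S C).

Inductive symb : Type := S0 | S1 | SDot | SOther (c : nat).
Definition move := list symb.
Inductive player : Type := PTop | PBot.
Definition pneg (p : player) : player := match p with PTop => PBot | PBot => PTop end.
Definition labmove := (player * move)%type.

(* A run (finite or infinite sequence of labmoves) is represented as a
   sequence with gaps: the run is the subsequence of the [Some] entries. *)
Definition run := nat -> option labmove.

Definition symb_eq_dec (a b : symb) : {a = b} + {a <> b}.
Proof. decide equality; apply PeanoNat.Nat.eq_dec. Defined.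

Fixpoint strip_prefix (alpha m : list symb) : option (list symb) :=
  match alpha, m with
  | [], _ => Some m
  | a :: al, c :: m' => if symb_eq_dec a c then strip_prefix al m' else None
  | _ :: _, [] => None
  end.

Definition run_prefix (alpha : list symb) (Th : run) : run :=
  fun n => match Th n with
           | Some (w, m) => match strip_prefix alpha m with
                            | Some b => Some (w, b)
                            | None => None
                            end
           | None => None
           end.

Fixpoint strip_bits (y : bitstring) (k : nat) (m : list symb) : option (list symb) :=
  match m with
  | SDot :: b => Some b
  | S0 :: m' => if y k then None else strip_bits y (S k) m'
  | S1 :: m' => if y k then strip_bits y (S k) m' else None
  | _ => None
  end.

Definition run_bits (y : bitstring) (Th : run) : run :=
  fun n => match Th n with
           | Some (w, m) => match strip_bits y 0 m with
                            | Some b => Some (w, b)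
                            | None => None
                            end
           | None => None
           end.

Definition bitsym (i : nat) : symb := if PeanoNat.Nat.eqb i 0 then S0 else S1.

Fixpoint proj (f : formula) (p : list nat) (xs : list bitstring) (Th : run) : run :=
  match p with
  | [] => Th
  | i :: p' =>
    match f with
    | FAnd a b | FOr a b =>
        proj (if PeanoNat.Nat.eqb i 0 then a else b) p' xs (run_prefix [bitsym i; SDot] Th)
    | FBang a | FQuest a =>
        match xs with
        | y :: xs' => proj a p' xs' (run_bits y Th)
        | [] => Th
        end
    | _ => Th
    end
  end.

Definition projection (F0 : formula) (Om : run) (u : unit_) : run :=
  proj F0 (fst u) (snd u) Om.

Definition labeled_moves (w : player) (Th : run) (b : move) : Prop :=
  exists n, Th n = Some (w, b).

Definition opposite (F0 : formula) (Om : run) (L M : unit_) : Prop :=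
  is_politeral_unit F0 L /\ is_politeral_unit F0 M /\
  (exists a, (origin F0 L = Some (Atom a) /\ origin F0 M = Some (NegAtom a)) \/
             (origin F0 L = Some (NegAtom a) /\ origin F0 M = Some (Atom a))) /\
  forall w b, labeled_moves w (projection F0 Om L) b <->
              labeled_moves (pneg w) (projection F0 Om M) b.

(* a !E-over-G domination chain: the list of triples (L_i, M_i, X_i),
   0-indexed, with L_n := G *)
Definition chainL (ch : list (unit_ * unit_ * unit_)) (G : unit_) (j : nat) : unit_ :=
  match nth_error ch j with Some (L, _, _) => L | None => G end.

Definition domination_chain (F0 : formula) (Om : run) (F : unit_ -> Prop)
    (B G : unit_) (ch : list (unit_ * unit_ * unit_)) : Prop :=
  length ch >= 1 /\
  (forall i L M X, nth_error ch i = Some (L, M, X) ->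
      opposite F0 Om L M /\ F L /\ F M /\
      drives F0 M (chainL ch G (S i)) X /\
      (forall j, S (S i) <= j <= length ch -> ~ exists Y, drives F0 M (chainL ch G j) Y) /\
      ~ subunit F0 M B) /\
  subunit F0 (chainL ch G 0) B.

Definition dominates (F0 : formula) (Om : run) (F : unit_ -> Prop) (B G : unit_) : Prop :=
  F B /\ F G /\
  ((subunit F0 G B /\ G <> B) \/ exists ch, domination_chain F0 Om F B G ch).

(* Main.v *)
Require Import Defs.
From Stdlib Require Import List Relations Lia Classical.
Import ListNotations.
Set Implicit Arguments.

Lemma child_len F0 u v : child F0 u v -> length (fst v) = S (length (fst u)).
Proof.
  intros [_ [[_ [i [_ ->]]] | [_ [y ->]]]]; simpl; rewrite length_app; simpl; lia.
Qed.

Lemma subunit_len F0 v u : subunit F0 v u -> u = v \/ length (fst u) < length (fst v).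
Proof.
  unfold subunit. intro Hr. apply clos_rt_rtn1_iff in Hr. induction Hr as [|w v Hc Hr IH].
  - left; reflexivity.
  - right. apply child_len in Hc. destruct IH as [-> | IH]; lia.
Qed.

Lemma subunit_antisym F0 a b : subunit F0 a b -> subunit F0 b a -> a = b.
Proof.
  intros H1 H2. destruct (subunit_len H1) as [|h1]; auto.
  destruct (subunit_len H2) as [|h2]; auto. lia.
Qed.

Lemma parent_unique F0 a b v : child F0 a v -> child F0 b v -> a = b.
Proof.
  destruct a as [pa xa], b as [pb xb].
  intros [Ua Ha] [Ub Hb].
  destruct Ha as [[Ta [i [_ Ea]]] | [Ta [y Ea]]];
  destruct Hb as [[Tb [j [_ Eb]]] | [Tb [y' Eb]]]; subst v; simpl in *;
  inversion Eb as [[E1 E2]].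
  - apply app_inj_tail in E1 as [-> _]. subst; reflexivity.
  - apply app_inj_tail in E1 as [-> _]. exfalso.
    destruct Ta as [[a1 [b1 Ha]]|[a1 [b1 Ha]]]; destruct Tb as [[c Hc]|[c Hc]];
      unfold origin in *; simpl in *; congruence.
  - apply app_inj_tail in E1 as [-> _]. exfalso.
    destruct Tb as [[a1 [b1 Ha]]|[a1 [b1 Ha]]]; destruct Ta as [[c Hc]|[c Hc]];
      unfold origin in *; simpl in *; congruence.
  - apply app_inj_tail in E1 as [-> _]. apply app_inj_tail in E2 as [-> _]. reflexivity.
Qed.

Lemma subunit_total F0 v K1 K2 :
  subunit F0 v K1 -> subunit F0 v K2 -> subunit F0 K1 K2 \/ subunit F0 K2 K1.
Proof.
  unfold subunit. intros H1 H2. apply clos_rt_rtn1_iff in H2.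
  revert K1 H1. induction H2 as [|w v Hc Hr IH]; intros K1 H1.
  - right. exact H1.
  - apply clos_rt_rtn1_iff in H1. inversion H1 as [|w' v' Hc' Hr']; subst.
    + left. apply clos_rt_rtn1_iff. econstructor; eauto.
    + rewrite (parent_unique Hc' Hc) in Hr'. apply IH.
      apply clos_rt_rtn1_iff; exact Hr'.
Qed.

Lemma unit_up F0 v K : is_unit F0 v -> subunit F0 v K -> is_unit F0 K.
Proof.
  unfold subunit. intros Hv Hr. apply clos_rt_rt1n_iff in Hr.
  destruct Hr as [|x y Hc _]; auto. exact (proj1 Hc).
Qed.

Lemma scs_exists F0 M H X :
  is_unit F0 M -> subunit F0 M X -> subunit F0 H X ->
  exists Y, smallest_common_superunit F0 M H Y /\ subunit F0 Y X.
Proof.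
  intros UM HMX HHX.
  set (P := fun K => subunit F0 M K /\ subunit F0 H K /\ subunit F0 K X).
  assert (Hb : forall K, P K -> length (fst K) <= length (fst M)).
  { intros K [h _]. destruct (subunit_len h) as [->|]; lia. }
  assert (Hmax : forall d K, P K -> length (fst M) - length (fst K) <= d ->
            exists K', P K' /\ forall K'', P K'' -> length (fst K'') <= length (fst K')).
  { induction d as [|d IH]; intros K HK Hd.
    - exists K. split; auto. intros K'' HK''. specialize (Hb _ HK''). lia.
    - destruct (classic (exists K', P K' /\ length (fst K') > length (fst K))) as [[K' [HK' Hl]]|Hn].
      + apply (IH K'); auto. specialize (Hb _ HK'). lia.
      + exists K. split; auto. intros K'' HK''.
        destruct (PeanoNat.Nat.le_gt_cases (length (fst K'')) (length (fst K))); auto.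
        exfalso; apply Hn; eauto. }
  assert (PX : P X) by (repeat split; auto; apply rt_refl).
  destruct (Hmax _ X PX (le_n _)) as [K [HK HKm]].
  exists K. destruct HK as (h1 & h2 & h3). split; auto.
  split; [eapply unit_up; eauto|]. split; [|split]; auto.
  intros K' _ h1' h2'.
  destruct (subunit_total h1 h1') as [h|h].
  -
    exact h.
  - assert (PK' : P K') by (repeat split; auto; eapply rt_trans; eauto).
    specialize (HKm _ PK').
    destruct (subunit_len h) as [->|]; [apply rt_refl|lia].
Qed.

Lemma drives_sub F0 M G X H :
  is_unit F0 M -> drives F0 M G X -> subunit F0 H G -> exists Y, drives F0 M H Y.
Proof.
  intros UM [[UX [hMX [hGX _]]] HQ] hHG.
  destruct (scs_exists UM hMX (rt_trans _ _ _ _ _ hGX hHG)) as [Y [Hs HYX]].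
  exists Y. split; auto. intros Q UQ QQ hMQ hne hQY.
  apply (HQ Q UQ QQ hMQ hne). eapply rt_trans; eauto.
Qed.

Lemma min_ex (P : nat -> Prop) : (exists n, P n) -> exists n, P n /\ forall m, m < n -> ~ P m.
Proof.
  intros [n Hn].
  assert (forall n k, k <= n -> P k -> exists n, P n /\ forall m, m < n -> ~ P m) by
  (induction n0 as [|n0 IH]; intros k Hk Pk;
   [ exists k; split; auto; intros; lia
   | destruct (classic (exists m, m < k /\ P m)) as [[m [Hm Pm]]|Hn'];
     [ apply (IH m); auto; lia
     | exists k; split; auto; intros m Hm Pm; apply Hn'; eauto ] ]).
  eauto.
Qed.

Theorem lemma8p3 (F0 : formula) (Om : run) (F : unit_ -> Prop) (B G H : unit_) :
  unit_tree F0 F -> is_bang_unit F0 B -> F B -> F G -> F H ->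
  dominates F0 Om F B G -> subunit F0 H G ->
  dominates F0 Om F B H.
Proof.
  intros Htree _ HFB HFG HFH [_ [_ Hdom]] Hsub.
  assert (Uf : forall u, F u -> is_unit F0 u) by (intros u Hu; exact (proj1 (proj2 Htree u Hu))).
  split; [|split]; auto.
  destruct Hdom as [[HGB Hne] | [ch [Hlen [Hch H0]]]].
  - left. split.
    + eapply rt_trans; eauto.
    + intros ->. apply Hne. apply (@subunit_antisym F0); auto; eapply rt_trans; eauto.
  - right.
    set (n := length ch) in *.
    set (P := fun i => i < n /\ exists L M X, nth_error ch i = Some (L, M, X) /\
                                  exists Y, drives F0 M H Y).
    assert (Pn : P (n - 1)).
    { destruct (nth_error ch (n - 1)) as [[[L M] X]|] eqn:E.
      2:{ apply nth_error_None in E. unfold n in *; lia. }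
      split; [lia|]. exists L, M, X. split; auto.
      destruct (Hch _ _ _ _ E) as (_ & _ & FM & Hd & _).
      replace (S (n - 1)) with n in Hd by lia.
      assert (chainL ch G n = G) as EG.
      { unfold chainL. destruct (nth_error ch n) eqn:E2; auto.
        assert (nth_error ch n <> None) by congruence. apply nth_error_Some in H1. lia. }
      rewrite EG in Hd. eapply drives_sub; eauto. }
    destruct (min_ex P (ex_intro _ _ Pn)) as [i [[Hi [L [M [X [Ei [Y HY]]]]]] Hmin]].
    set (ch' := firstn i ch ++ [(L, M, Y)]).
    assert (F1 : length (firstn i ch) = i) by (apply firstn_length_le; unfold n in *; lia).
    assert (F2 : forall k, k < i -> nth_error ch' k = nth_error ch k).
    { intros k Hk. unfold ch'. rewrite nth_error_app1 by lia.
      rewrite nth_error_firstn. destruct (PeanoNat.Nat.ltb_spec k i); auto; lia. }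
    assert (F3 : nth_error ch' i = Some (L, M, Y)).
    { unfold ch'. rewrite nth_error_app2 by lia. rewrite F1, PeanoNat.Nat.sub_diag. reflexivity. }
    assert (Lch' : length ch' = S i) by (unfold ch'; rewrite length_app, F1; simpl; lia).
    assert (F4 : forall k, k > i -> nth_error ch' k = None) by
      (intros k Hk; apply nth_error_None; lia).
    assert (C1 : forall j, j <= i -> chainL ch' H j = chainL ch G j).
    { intros j Hj. unfold chainL. destruct (PeanoNat.Nat.eq_dec j i) as [->|].
      - rewrite F3, Ei; reflexivity.
      - rewrite F2 by lia. destruct (nth_error ch j) eqn:Ej; auto. apply nth_error_None in Ej. unfold n in *; lia. }
    assert (C2 : chainL ch' H (S i) = H) by (unfold chainL; rewrite F4 by lia; reflexivity).
    exists ch'. split; [lia|]. split.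
    + intros k L' M' X' Ek.
      destruct (PeanoNat.Nat.lt_total k i) as [Hk|[->|Hk]].
      * rewrite F2 in Ek by lia.
        destruct (Hch _ _ _ _ Ek) as (h1 & h2 & h3 & h4 & h5 & h6).
        refine (conj h1 (conj h2 (conj h3 (conj _ (conj _ h6))))).
        -- rewrite C1 by lia. exact h4.
        -- intros j Hj. destruct (PeanoNat.Nat.eq_dec j (S i)) as [->|].
           ++ rewrite C2. intros [Y' HY']. apply (Hmin k Hk).
              split; [lia|]. exists L', M', X'. split; eauto.
           ++ rewrite C1 by lia. apply h5. unfold n in *; lia.
      * rewrite F3 in Ek. inversion Ek; subst L' M' X'.
        destruct (Hch _ _ _ _ Ei) as (h1 & h2 & h3 & h4 & h5 & h6).
        refine (conj h1 (conj h2 (conj h3 (conj _ (conj _ h6))))).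
        -- rewrite C2. exact HY.
        -- intros j Hj. lia.
      * rewrite F4 in Ek by lia. discriminate.
    + rewrite C1 by lia. exact H0.
Qed.
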